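(* Let $A$ be a commutative noetherian local ring, let $x,y\in A$ be a regular exact pair of zero divisors, and let $a\in A$ be weakly regular on the $A$-module $A/(x,y)$. Then there are isomorphisms of $A$-algebras $\operatorname{End}_A(G_a)\cong A\cong \operatorname{End}_A(H_a)$. In particular, $\operatorname{End}_A(G_a)$ and $\operatorname{End}_A(H_a)$ are commutative noetherian local rings, and the $A$-modules $G_a$ and $H_a$ are indecomposable.
   Context: Two non-units $x,y\in A$ form an exact pair of zero divisors if $\operatorname{Ann}_A(x)=(y)$ and $\operatorname{Ann}_A(y)=(x)$; such a pair is regular if $(x)\cap(y)=0$. An element $a\in A$ is weakly regular on a module $M$ if multiplication by $a$ on $M$ is injective. For $a\in A$, let $\gamma_a=\begin{pmatrix} x & a\\ 0 & y\end{pmatrix}$ and $\eta_a=\begin{pmatrix} y & -a\\ 0 & x\end{pmatrix}$, viewed as $A$-linear maps $A^2\to A^2$ acting on column vectors, and set $G_a=\operatorname{Coker}\gamma_a$, $H_a=\operatorname{Coker}\eta_a$. *)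

(* Defs.v *)
(* Modules over A are handled concretely: the cokernel of a
   2x2 matrix g is A^2 (column vectors) modulo the image of g (setoid style). *)
From mathcomp Require Import all_boot all_algebra.
Set Implicit Arguments. Unset Strict Implicit. Unset Printing Implicit Defensive.
Import GRing.Theory.
Local Open Scope ring_scope.

Section RingNotions.
Variable A : comRingType.

Definition is_unit (x : A) : Prop := exists u, u * x = 1.
Definition is_ideal (I : A -> Prop) : Prop :=
  I 0 /\ (forall u v, I u -> I v -> I (u + v)) /\ (forall r u, I u -> I (r * u)).
Definition fin_gen_ideal (I : A -> Prop) : Prop :=
  exists s : seq A, forall z,
    I z <-> exists c : 'I_(size s) -> A, z = \sum_(i < size s) c i * s`_i.
Definition noetherian_ring : Prop :=
  forall I, is_ideal I -> fin_gen_ideal I.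
Definition maximal_ideal (I : A -> Prop) : Prop :=
  is_ideal I /\ ~ I 1 /\
  (forall J, is_ideal J -> (forall z, I z -> J z) -> ~ J 1 -> forall z, J z -> I z).
Definition local_ring : Prop :=
  exists m, maximal_ideal m /\ forall m', maximal_ideal m' -> forall z, m' z <-> m z.

Definition pid (x z : A) : Prop := exists r, z = r * x.
Definition ideal2 (x y z : A) : Prop := exists r s, z = r * x + s * y.
Definition ann (x z : A) : Prop := z * x = 0.

Definition exact_pair_zd (x y : A) : Prop :=
  ~ is_unit x /\ ~ is_unit y /\
  (forall z, ann x z <-> pid y z) /\ (forall z, ann y z <-> pid x z).
Definition regular_exact_pair (x y : A) : Prop :=
  exact_pair_zd x y /\ (forall z, pid x z -> pid y z -> z = 0).
Definition weakly_regular_quot2 (a x y : A) : Prop :=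
  forall b, ideal2 x y (a * b) -> ideal2 x y b.

Definition mx22 (p q r s : A) : 'M[A]_2 :=
  \matrix_(i < 2, j < 2)
    if (i == 0 :> nat) then (if (j == 0 :> nat) then p else q)
    else (if (j == 0 :> nat) then r else s).
Definition gamma_mx (x y a : A) : 'M[A]_2 := mx22 x a 0 y.
Definition eta_mx (x y a : A) : 'M[A]_2 := mx22 y (- a) 0 x.

Definition im_mx (g : 'M[A]_2) (v : 'cV[A]_2) : Prop := exists w, v = g *m w.
Definition coker_eq (g : 'M[A]_2) (u v : 'cV[A]_2) : Prop := im_mx g (u - v).

Definition vfun := 'cV[A]_2 -> 'cV[A]_2.

(* A-linear endomorphisms of Coker g, given on representatives *)
Definition is_coker_endo (g : 'M[A]_2) (f : vfun) : Prop :=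
  (forall u v, coker_eq g u v -> coker_eq g (f u) (f v)) /\
  (forall u v, coker_eq g (f (u + v)) (f u + f v)) /\
  (forall r u, coker_eq g (f (r *: u)) (r *: f u)).
Definition endo_eq (g : 'M[A]_2) (f h : vfun) : Prop :=
  forall u, coker_eq g (f u) (h u).
Definition struct_map (r : A) : vfun := fun u => r *: u.

Definition End_struct_iso (g : 'M[A]_2) : Prop :=
  (forall r, is_coker_endo g (struct_map r)) /\
  (forall r s, endo_eq g (struct_map r) (struct_map s) -> r = s) /\
  (forall f, is_coker_endo g f -> exists r, endo_eq g f (struct_map r)).

(* ring structure of End: + pointwise, * = composition, 1 = id *)
Definition End_comm (g : 'M[A]_2) : Prop :=
  forall f h, is_coker_endo g f -> is_coker_endo g h -> endo_eq g (f \o h) (h \o f).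
Definition End_ideal (g : 'M[A]_2) (I : vfun -> Prop) : Prop :=
  (forall f, I f -> is_coker_endo g f) /\
  (forall f h, I f -> endo_eq g f h -> I h) /\
  I (fun _ => 0) /\
  (forall f h, I f -> I h -> I (fun u => f u + h u)) /\
  (forall f h, is_coker_endo g f -> I h -> I (f \o h) /\ I (h \o f)).
Definition End_noetherian (g : 'M[A]_2) : Prop :=
  forall I, End_ideal g I ->
  exists s : seq vfun,
    (forall i : 'I_(size s), is_coker_endo g (nth (fun _ => 0) s i)) /\
    forall f, I f <->
      exists c : 'I_(size s) -> vfun,
        (forall i, is_coker_endo g (c i)) /\
        endo_eq g f (fun u => \sum_(i < size s) c i (nth (fun _ => 0) s i u)).
Definition End_maximal_ideal (g : 'M[A]_2) (I : vfun -> Prop) : Prop :=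
  End_ideal g I /\ ~ I id /\
  (forall J, End_ideal g J -> (forall f, I f -> J f) -> ~ J id ->
     forall f, J f -> I f).
Definition End_local (g : 'M[A]_2) : Prop :=
  exists m, End_maximal_ideal g m /\
    forall m', End_maximal_ideal g m' -> forall f, m' f <-> m f.

(* submodules of Coker g (as saturated predicates on representatives) *)
Definition coker_submod (g : 'M[A]_2) (M : 'cV[A]_2 -> Prop) : Prop :=
  (forall u v, coker_eq g u v -> M u -> M v) /\ M 0 /\
  (forall u v, M u -> M v -> M (u + v)) /\ (forall r u, M u -> M (r *: u)).
Definition coker_sub_zero (g : 'M[A]_2) (M : 'cV[A]_2 -> Prop) : Prop :=
  forall u, M u -> coker_eq g u 0.
Definition coker_indecomposable (g : 'M[A]_2) : Prop :=
  (exists u, ~ coker_eq g u 0) /\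
  forall M N, coker_submod g M -> coker_submod g N ->
    (forall u, exists m n, M m /\ N n /\ coker_eq g u (m + n)) ->
    (forall u, M u -> N u -> coker_eq g u 0) ->
    coker_sub_zero g M \/ coker_sub_zero g N.

Definition End_conclusions (g : 'M[A]_2) : Prop :=
  End_struct_iso g /\ End_comm g /\ End_noetherian g /\ End_local g /\
  coker_indecomposable g.

End RingNotions.

(* Main.v *)
From Stdlib Require Import Classical ClassicalEpsilon.
Require Import Defs.
From mathcomp Require Import all_boot all_algebra ring.
Set Implicit Arguments. Unset Strict Implicit. Unset Printing Implicit Defensive.
Import GRing.Theory.
Local Open Scope ring_scope.

Section Ring.
Variable A : comRingType.

Lemma ideal_sum (J : A -> Prop) n (F : 'I_n -> A) :
  is_ideal J -> (forall i, J (F i)) -> J (\sum_i F i).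
Proof. case=> J0 [JD JM] HF. by apply: big_ind. Qed.

Lemma fg_gen_mem (J : A -> Prop) (s : seq A) :
  (forall z, J z <-> exists c : 'I_(size s) -> A, z = \sum_(i < size s) c i * s`_i) ->
  forall i : 'I_(size s), J s`_i.
Proof.
move=> H i; apply/H; exists (fun j => (j == i)%:R).
rewrite (bigD1 i) //= eqxx mul1r big1 ?addr0 // => j /negbTE ->; by rewrite mul0r.
Qed.

Lemma fg_sub (J K : A -> Prop) (s : seq A) : is_ideal K ->
  (forall z, J z <-> exists c : 'I_(size s) -> A, z = \sum_(i < size s) c i * s`_i) ->
  (forall i : 'I_(size s), K s`_i) -> forall z, J z -> K z.
Proof.
move=> HK H Hs z /H [c ->]; apply: ideal_sum => // i.
by case: HK => _ [_ HM]; apply: HM.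
Qed.

Lemma exists_max (Hn : noetherian_ring A) (I : A -> Prop) :
  is_ideal I -> ~ I 1 -> exists M, maximal_ideal M /\ forall z, I z -> M z.
Proof.
move=> HI HI1; apply: NNPP => Hno.
pose P (J : A -> Prop) := is_ideal J /\ ~ J 1 /\ (forall z, I z -> J z).
have step : forall J, P J -> exists K, P K /\ (forall z, J z -> K z) /\ exists z, K z /\ ~ J z.
  move=> J [HJ [HJ1 HIJ]].
  apply: NNPP => Hne; apply: Hno; exists J; split => //; split => //; split => // K HK HJK HK1 z Kz.
  apply: NNPP => nJz; apply: Hne; exists K; split; [split; [|split] | split] => //.
    by move=> t /HIJ /HJK.
  by exists z.
have step' : forall J : {J | P J}, {K : {J | P J} | (forall z, sval J z -> sval K z) /\ exists z, sval K z /\ ~ sval J z}.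
  move=> [J PJ]; have [K [PK H]] := constructive_indefinite_description _ (step J PJ).
  by exists (exist _ K PK).
pose next J := sval (step' J).
pose ch n := iter n next (exist _ I (conj HI (conj HI1 (fun z h => h)))).
have mono1 n z : sval (ch n) z -> sval (ch n.+1) z.
  exact: (proj1 (svalP (step' (ch n))) z).
have mono n k z : sval (ch n) z -> sval (ch (n + k)%N) z.
  elim: k => [|k IH]; first by rewrite addn0.
  by move=> /IH; rewrite addnS; apply: mono1.
pose U z := exists n, sval (ch n) z.
have HU : is_ideal U.
  split; [|split].
  - exists 0%N; by have [[H0 _] _] := svalP (ch 0).
  - move=> u v [n Hu] [m Hv]; exists (n + m)%N.
    have [[_ [HD _]] _] := svalP (ch (n + m)%N); apply: HD; first exact: mono.
    by rewrite addnC; apply: mono.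
  - move=> r u [n Hu]; exists n.
    by have [[_ [_ HM]] _] := svalP (ch n); apply: HM.
have [s Hs] := Hn U HU.
have HsU := fg_gen_mem Hs.
have seqN : forall l : seq A, (forall z, z \in l -> U z) -> exists N, forall z, z \in l -> sval (ch N) z.
  elim=> [|b l IH] H; first by exists 0%N.
  have [N HN] := IH (fun z hz => H z (mem_behead (s:=b :: l) hz)).
  have [n Hb] := H b (mem_head _ _).
  exists (N + n)%N => z; rewrite in_cons => /orP [/eqP -> | /HN]; last exact: mono.
  by rewrite addnC; apply: mono.
have [N HN] := seqN s (fun z hz => match (nthP 0 hz) with
  | ex_intro2 i hi e => eq_ind _ U (HsU (Ordinal hi)) _ e end).
have HUN : forall z, U z -> sval (ch N) z.
  apply: (fg_sub _ Hs); first by have [HH _] := svalP (ch N).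
  move=> i; apply: HN; exact: mem_nth.
have [_ [z [Kz nJz]]] := svalP (step' (ch N)).
by apply: nJz; apply: HUN; exists N.+1.
Qed.

Lemma idem_triv (Hn : noetherian_ring A) (Hl : local_ring A) (c : A) :
  c * c = c -> c = 0 \/ c = 1.
Proof.
move=> Hc; have [m [Hm Hu]] := Hl.
have unit z : ~ m z -> is_unit z.
  move=> nmz; apply: NNPP => nu.
  have HI : is_ideal (pid z).
    split; [|split].
    - by exists 0; rewrite mul0r.
    - by move=> u v [r ->] [t ->]; exists (r + t); rewrite mulrDl.
    - by move=> r u [t ->]; exists (r * t); rewrite mulrA.
  have HI1 : ~ pid z 1 by move=> [r Hr]; apply: nu; exists r.
  have [M [HM HzM]] := exists_max Hn HI HI1.
  apply: nmz; apply/(Hu M HM); apply: HzM; exists 1; by rewrite mul1r.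
have [[m0 [mD mM]] [m1 _]] := Hm.
case: (classic (m c)) => mc.
- have nm1c : ~ m (1 - c).
    by move=> h; apply: m1; have := mD _ _ h mc; rewrite subrK.
  have [v Hv] := unit _ nm1c; left.
  have -> : c = v * ((1 - c) * c) by rewrite mulrA Hv mul1r.
  by rewrite mulrBl mul1r Hc subrr mulr0.
- have [v Hv] := unit _ mc; right.
  have H0 : 1 - c = 0.
    have -> : 1 - c = v * (c * (1 - c)) by rewrite mulrA Hv mul1r.
    by rewrite mulrBr mulr1 Hc subrr mulr0.
  by apply/eqP; rewrite eq_sym -subr_eq0 H0.
Qed.
End Ring.

Section Gen.
Variable A : comRingType.
Variable g : 'M[A]_2.
Local Notation ceq := (coker_eq g).
Local Notation endo := (is_coker_endo g).
Local Notation eeq := (endo_eq g).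
Local Notation st := (@struct_map A).

Lemma im0 : im_mx g 0. Proof. by exists 0; rewrite mulmx0. Qed.
Lemma imD u v : im_mx g u -> im_mx g v -> im_mx g (u + v).
Proof. by move=> [w ->] [w' ->]; exists (w + w'); rewrite mulmxDr. Qed.
Lemma imZ r u : im_mx g u -> im_mx g (r *: u).
Proof. by move=> [w ->]; exists (r *: w); rewrite scalemxAr. Qed.
Lemma imN u : im_mx g u -> im_mx g (- u).
Proof. by move=> H; rewrite -scaleN1r; apply: imZ. Qed.

Lemma ceq_refl u : ceq u u. Proof. by rewrite /coker_eq subrr; apply: im0. Qed.
Lemma ceq_sym u v : ceq u v -> ceq v u.
Proof. by move=> /imN; rewrite /coker_eq opprB. Qed.
Lemma ceq_trans u v w : ceq u v -> ceq v w -> ceq u w.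
Proof. by move=> H1 H2; have := imD H1 H2; rewrite /coker_eq addrA subrK. Qed.
Lemma ceqD u v u' v' : ceq u u' -> ceq v v' -> ceq (u + v) (u' + v').
Proof.
move=> H1 H2; have := imD H1 H2; rewrite /coker_eq.
by have -> : u - u' + (v - v') = u + v - (u' + v') by rewrite opprD addrACA.
Qed.
Lemma ceqZ r u v : ceq u v -> ceq (r *: u) (r *: v).
Proof. by move=> /(imZ r); rewrite /coker_eq scalerBr. Qed.
Lemma ceqN u v : ceq u v -> ceq (- u) (- v).
Proof. by move=> H; rewrite -!scaleN1r; apply: ceqZ. Qed.

Lemma eeq_sym f h : eeq f h -> eeq h f. Proof. by move=> H u; apply: ceq_sym. Qed.
Lemma eeq_trans f h k : eeq f h -> eeq h k -> eeq f k.
Proof. by move=> H1 H2 u; apply: ceq_trans (H2 u). Qed.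

Lemma st_endo r : endo (st r).
Proof.
split; [|split] => [u v|u v|s u]; rewrite /struct_map.
- exact: ceqZ.
- rewrite scalerDr; exact: ceq_refl.
- rewrite !scalerA mulrC; exact: ceq_refl.
Qed.

Lemma eeq_endo f h : endo f -> eeq f h -> endo h.
Proof.
move=> [H1 [H2 H3]] E; split; [|split].
- move=> u v /H1 H; apply: ceq_trans (E v); apply: ceq_trans H; exact: ceq_sym.
- move=> u v; apply: ceq_trans (ceq_sym (E _)) _; apply: ceq_trans (H2 u v) _.
  by apply: ceqD.
- move=> r u; apply: ceq_trans (ceq_sym (E _)) _; apply: ceq_trans (H3 r u) _.
  by apply: ceqZ.
Qed.

Lemma eeq_comp f h c d : eeq f (st c) -> eeq h (st d) -> eeq (f \o h) (st (c * d)).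
Proof.
move=> Hf Hh u /=; apply: ceq_trans (Hf (h u)) _; rewrite /struct_map -scalerA.
exact: ceqZ.
Qed.
Lemma eeq_add f h c d : eeq f (st c) -> eeq h (st d) -> eeq (fun u => f u + h u) (st (c + d)).
Proof. by move=> Hf Hh u; rewrite /struct_map scalerDl; apply: ceqD. Qed.
Lemma eeq_zero : eeq (fun _ => 0) (st 0).
Proof. by move=> u; rewrite /struct_map scale0r; apply: ceq_refl. Qed.
Lemma eeq_id : eeq id (st 1).
Proof. by move=> u; rewrite /struct_map scale1r; apply: ceq_refl. Qed.

Hypothesis Hiso : End_struct_iso g.

Lemma endoP f : endo f <-> exists c, eeq f (st c).
Proof.
split; first by case: Hiso => _ [_ H]; apply: H.
by move=> [c Hc]; apply: (eeq_endo (st_endo c)); apply: eeq_sym.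
Qed.

Lemma st_inj r s : eeq (st r) (st s) -> r = s.
Proof. by case: Hiso => _ [H _]; apply: H. Qed.

Lemma rep_uniq f r s : eeq f (st r) -> eeq f (st s) -> r = s.
Proof. by move=> H1 H2; apply: st_inj; apply: eeq_trans (eeq_sym H1) H2. Qed.

Lemma End_comm_gen : End_comm g.
Proof.
move=> f h /endoP [c Hc] /endoP [d Hd].
apply: eeq_trans (eeq_comp Hc Hd) _; rewrite mulrC; apply: eeq_sym; exact: eeq_comp.
Qed.

Definition JI (I : vfun A -> Prop) (r : A) : Prop := I (st r).
Definition LK (K : A -> Prop) (f : vfun A) : Prop := endo f /\ exists r, K r /\ eeq f (st r).

Lemma JI_ideal I : End_ideal g I -> is_ideal (JI I).
Proof.
move=> [Hend [Heq [H0 [HD HM]]]]; split; [|split].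
- by apply: (Heq _ _ H0); apply: eeq_zero.
- move=> u v Hu Hv; apply: (Heq _ _ (HD _ _ Hu Hv)).
  apply: eeq_trans (eeq_add (fun w => ceq_refl _) (fun w => ceq_refl _)) _.
  by move=> w; apply: ceq_refl.
- move=> r u Hu; have [H1 _] := HM _ _ (st_endo r) Hu.
  apply: (Heq _ _ H1); apply: eeq_comp => w; exact: ceq_refl.
Qed.

Lemma JI_1 I : End_ideal g I -> (I id <-> JI I 1).
Proof.
move=> [_ [Heq _]]; split => H; apply: (Heq _ _ H); first exact: eeq_id.
exact: eeq_sym eeq_id.
Qed.

Lemma LK_ideal K : is_ideal K -> End_ideal g (LK K).
Proof.
move=> [K0 [KD KM]]; split; [|split; [|split; [|split]]].
- by move=> f [].
- move=> f h [Hf [r [Kr Hr]]] E; split; first exact: eeq_endo Hf E.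
  by exists r; split => //; apply: eeq_trans (eeq_sym E) Hr.
- split; first by apply/endoP; exists 0; exact: eeq_zero.
  by exists 0; split => //; exact: eeq_zero.
- move=> f h [_ [r [Kr Hr]]] [_ [s [Ks Hs]]].
  have E := eeq_add Hr Hs.
  by split; [apply/endoP; exists (r + s) | exists (r + s); split => //; apply: KD].
- move=> f h /endoP [c Hc] [_ [r [Kr Hr]]]; split.
  + have E := eeq_comp Hc Hr.
    by split; [apply/endoP; exists (c * r) | exists (c * r); split => //; apply: KM].
  + have E := eeq_comp Hr Hc.
    by split; [apply/endoP; exists (r * c) | exists (r * c); split => //; rewrite mulrC; apply: KM].
Qed.

Lemma I_LK I : End_ideal g I -> forall f, I f <-> LK (JI I) f.
Proof.
move=> HI f; have [Hend [Heq _]] := HI; split.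
- move=> If; have Ef := Hend _ If; split => //.
  have [r Hr] := (endoP f).1 Ef; exists r; split => //.
  exact: Heq _ _ If Hr.
- move=> [_ [r [Ir Hr]]]; exact: Heq _ _ Ir (eeq_sym Hr).
Qed.

Lemma K_JLK K r : K r <-> JI (LK K) r.
Proof.
split; first by move=> Kr; split; [exact: st_endo | exists r; split => //; move=> u; exact: ceq_refl].
move=> [_ [s [Ks Hs]]].
by have -> : r = s by apply: st_inj.
Qed.

Lemma LK_max m : maximal_ideal m -> End_maximal_ideal g (LK m).
Proof.
move=> [Hm [m1 Hmax]]; split; first exact: LK_ideal.
split.
  move=> [_ [r [mr Hr]]]; apply: m1.
  by have -> : (1 : A) = r by apply: rep_uniq Hr; exact: eeq_id.
move=> J HJ HmJ nJ f Jf.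
have HJJ := JI_ideal HJ.
have sub : forall z, m z -> JI J z.
  by move=> z mz; apply: HmJ; split; [exact: st_endo | exists z; split => // u; exact: ceq_refl].
have nJ1 : ~ JI J 1 by move=> H; apply: nJ; apply/(JI_1 HJ).
have := (I_LK HJ f).1 Jf; move=> [Ef [r [Jr Hr]]].
by split => //; exists r; split => //; apply: (Hmax _ HJJ sub nJ1).
Qed.

Lemma JI_max m' : End_maximal_ideal g m' -> maximal_ideal (JI m').
Proof.
move=> [Hm' [n1 Hmax]]; split; first exact: JI_ideal.
split; first by move=> H; apply: n1; apply/(JI_1 Hm').
move=> K HK sub nK1 z Kz.
have HLK := LK_ideal HK.
have sub' : forall f, m' f -> LK K f.
  move=> f /(I_LK Hm') [Ef [r [Jr Hr]]]; split => //; exists r; split => //; exact: sub.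
have nL : ~ LK K id by move=> H; apply: nK1; apply/(K_JLK K 1); exact/(JI_1 HLK).
exact: (Hmax _ HLK sub' nL) _ ((K_JLK K z).1 Kz).
Qed.

Lemma End_local_gen : local_ring A -> End_local g.
Proof.
move=> [m [Hm Hu]]; exists (LK m); split; first exact: LK_max.
move=> m' Hm' f.
have HJ := Hu _ (JI_max Hm').
have [Hid _] := Hm'.
split.
- move=> /(I_LK Hid f) [Ef [r [Hr E]]]; split => //; exists r; split => //; exact/HJ.
- move=> [Ef [r [Hr E]]]; apply/(I_LK Hid f); split => //; exists r; split => //; exact/HJ.
Qed.

Lemma End_noeth_gen : noetherian_ring A -> End_noetherian g.
Proof.
move=> Hn I HI.
have [sA Hs] := Hn _ (JI_ideal HI).
have HsI := fg_gen_mem Hs.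
have [Hend [Heq [H0 [HD HM]]]] := HI.
exists (map st sA).
have nthE : forall i : 'I_(size sA), nth (fun _ => 0) (map st sA) i = st sA`_i.
  by move=> i; rewrite (nth_map 0).
rewrite size_map; split; first by move=> i; rewrite nthE; exact: st_endo.
move=> f; split.
- move=> If; have [Ef [r [Jr Hr]]] := (I_LK HI f).1 If.
  have [c Hc] := (Hs r).1 Jr.
  exists (fun i => st (c i)); split; first by move=> i; exact: st_endo.
  move=> u; under eq_bigr => i _ do rewrite nthE.
  apply: ceq_trans (Hr u) _; rewrite /struct_map Hc scaler_suml.
  rewrite (eq_bigr (fun i => c i *: (sA`_i *: u))); first exact: ceq_refl.
  by move=> i _; rewrite scalerA.
- move=> [c [Hc E]].
  have Hd : forall i, exists d, eeq (c i) (st d) by move=> i; apply/endoP.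
  pose d i := proj1_sig (constructive_indefinite_description _ (Hd i)).
  have HdP : forall i, eeq (c i) (st (d i)).
    by move=> i; exact: proj2_sig (constructive_indefinite_description _ (Hd i)).
  pose r := \sum_(i < size sA) d i * sA`_i.
  have Jr : JI I r.
    apply: ideal_sum; first exact: JI_ideal.
    by move=> i; have [_ [_ M]] := JI_ideal HI; apply: M.
  apply: (Heq _ _ Jr) => u; apply: ceq_sym; apply: ceq_trans (E u) _.
  under eq_bigr => i _ do rewrite nthE.
  rewrite /struct_map /r.
  apply: (big_ind2 (fun v t => ceq v (t *: u))).
  + by rewrite scale0r; exact: ceq_refl.
  + by move=> v1 t1 v2 t2 H1 H2; rewrite scalerDl; apply: ceqD.
  + by move=> i _; apply: ceq_trans (HdP i _) _; rewrite /struct_map scalerA; exact: ceq_refl.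
Qed.


Lemma indec_gen : noetherian_ring A -> local_ring A -> coker_indecomposable g.
Proof.
move=> Hn Hl; split.
  apply: NNPP => H.
  have H' : forall u, ceq u 0 by move=> u; apply: NNPP => nu; apply: H; exists u.
  have : (1:A) = 0 by apply: st_inj => u; rewrite /struct_map scale1r scale0r; exact: H'.
  by move/eqP; rewrite oner_eq0.
move=> M N [Ms [M0 [MD MZ]]] [Ns [N0 [ND NZ]]] Hdec Hint.
have MB : forall m m', M m -> M m' -> M (m - m').
  by move=> m m' H1 H2; apply: MD => //; rewrite -scaleN1r; apply: MZ.
have NB : forall m m', N m -> N m' -> N (m - m').
  by move=> m m' H1 H2; apply: ND => //; rewrite -scaleN1r; apply: NZ.
have uniq : forall m n m' n', M m -> N n -> M m' -> N n' -> ceq (m + n) (m' + n') -> ceq m m'.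
  move=> m n m' n' Mm Nn Mm' Nn' E.
  have E' : ceq (m - m') (n' - n).
    by rewrite /coker_eq (_ : m - m' - (n' - n) = m + n - (m' + n')) // opprB opprD addrACA.
  have := Hint _ (MB _ _ Mm Mm') (Ns _ _ (ceq_sym E') (NB _ _ Nn' Nn)).
  by rewrite /coker_eq subr0.
pose p u := sval (constructive_indefinite_description _ (Hdec u)).
have Hp : forall u, exists n, M (p u) /\ N n /\ ceq u (p u + n).
  by move=> u; exact: svalP (constructive_indefinite_description _ (Hdec u)).
have pE : endo p.
  split; [|split].
  - move=> u v E; have [nu [Mu [Nu Eu]]] := Hp u; have [nv [Mv [Nv Ev]]] := Hp v.
    apply: (uniq _ _ _ _ Mu Nu Mv Nv).
    by apply: ceq_trans (ceq_sym Eu) _; apply: ceq_trans E Ev.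
  - move=> u v; have [nu [Mu [Nu Eu]]] := Hp u; have [nv [Mv [Nv Ev]]] := Hp v.
    have [nw [Mw [Nw Ew]]] := Hp (u + v).
    apply: (uniq _ _ _ _ Mw Nw (MD _ _ Mu Mv) (ND _ _ Nu Nv)).
    apply: ceq_trans (ceq_sym Ew) _; rewrite addrACA; exact: ceqD.
  - move=> r u; have [nu [Mu [Nu Eu]]] := Hp u; have [nw [Mw [Nw Ew]]] := Hp (r *: u).
    apply: (uniq _ _ _ _ Mw Nw (MZ r _ Mu) (NZ r _ Nu)).
    apply: ceq_trans (ceq_sym Ew) _; rewrite -scalerDr; exact: ceqZ.
have [c Hc] := (endoP p).1 pE.
have ppu : forall u, ceq (p (p u)) (p u).
  move=> u; have [n [Mp [Nn En]]] := Hp (p u).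
  apply: ceq_sym; apply: (uniq (p u) 0 _ n) => //; first by have [_ [H _]] := Hp u.
  by rewrite addr0.
have idem : c * c = c.
  apply: st_inj => u; rewrite /struct_map -scalerA.
  apply: ceq_trans (ceqZ c (ceq_sym (Hc u))) _.
  apply: ceq_trans (ceq_sym (Hc (p u))) _.
  apply: ceq_trans (ppu u) _; exact: Hc.
have [c0|c1] := idem_triv Hn Hl idem.
- left => m Mm; have [n [Mp [Nn En]]] := Hp m.
  have E : ceq m (p m) by apply: (uniq m 0 _ n) => //; rewrite addr0.
  apply: ceq_trans E _; have := Hc m; by rewrite /struct_map c0 scale0r.
- right => n Nn; have [n' [Mp [Nn' En]]] := Hp n.
  have E : ceq 0 (p n) by apply: (uniq 0 n _ n') => //; rewrite add0r.
  apply: ceq_sym; apply: ceq_trans E _; have := Hc n; by rewrite /struct_map c1 scale1r.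
Qed.

Lemma conclusions_gen : noetherian_ring A -> local_ring A -> End_conclusions g.
Proof.
move=> Hn Hl; split => //; split; first exact: End_comm_gen.
split; first exact: End_noeth_gen.
split; first exact: End_local_gen.
exact: indec_gen.
Qed.
End Gen.

Section Spec.
Variables (A : comRingType) (x y a : A).
Hypothesis Hax : forall z, z * x = 0 <-> exists t, z = t * y.
Hypothesis Hay : forall z, z * y = 0 <-> exists t, z = t * x.
Hypothesis Hxy : forall z, (exists t, z = t * x) -> (exists t, z = t * y) -> z = 0.
Hypothesis Hw : weakly_regular_quot2 a x y.

Definition col2 (p q : A) : 'cV[A]_2 := \col_(i < 2) (if i == 0 :> nat then p else q).
Lemma col2_ext (u : 'cV[A]_2) : u = col2 (u 0 0) (u 1 0).
Proof. apply/matrixP => i j; rewrite !mxE (ord1 j). by case: i => [[|[|k]] Hi] //=; congr (u _ _); apply: val_inj. Qed.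
Lemma col2_inj p q r s : col2 p q = col2 r s -> p = r /\ q = s.
Proof. move/matrixP => H; split; [have := H 0 0 | have := H 1 0]; by rewrite !mxE. Qed.
Lemma mul22 p q r s c d : mx22 p q r s *m col2 c d = col2 (p*c + q*d) (r*c + s*d).
Proof. apply/matrixP => i j; rewrite !mxE big_ord_recr big_ord1 /= !mxE /=.
by case: i => [[|[|k]] Hi] //=. Qed.
Lemma col2D p q r s : col2 p q + col2 r s = col2 (p + r) (q + s).
Proof. apply/matrixP => i j; rewrite !mxE. by case: (i == 0 :> nat). Qed.
Lemma col2N p q : - col2 p q = col2 (- p) (- q).
Proof. apply/matrixP => i j; rewrite !mxE. by case: (i == 0 :> nat). Qed.
Lemma col2Z c p q : c *: col2 p q = col2 (c * p) (c * q).
Proof. apply/matrixP => i j; rewrite !mxE. by case: (i == 0 :> nat). Qed.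
Lemma col20 : (0 : 'cV[A]_2) = col2 0 0.
Proof. apply/matrixP => i j; rewrite !mxE. by case: (i == 0 :> nat). Qed.

Lemma by_eq (k L R EL ER : A) : EL = ER -> L - R = k * (EL - ER) -> L = R.
Proof. by move=> E H; apply/eqP; rewrite -subr_eq0 H E subrr mulr0. Qed.
Arguments by_eq k {L R EL ER}.

Local Notation g := (mx22 x a 0 y).
Local Notation ceq := (coker_eq g).

Lemma imP p q : im_mx g (col2 p q) <-> exists w1 w2, p = x * w1 + a * w2 /\ q = y * w2.
Proof.
split.
- move=> [w]; rewrite (col2_ext w) mul22 => /col2_inj [-> ->].
  by exists (w 0 0), (w 1 0); rewrite mul0r add0r.
- move=> [w1 [w2 [-> ->]]]; exists (col2 w1 w2); by rewrite mul22 mul0r add0r.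
Qed.

Lemma ceqP p q p' q' : ceq (col2 p q) (col2 p' q') <->
  exists w1 w2, p - p' = x * w1 + a * w2 /\ q - q' = y * w2.
Proof. by rewrite /coker_eq col2N col2D; apply: imP. Qed.

Lemma struct_iso : End_struct_iso g.
Proof.
split; first exact: st_endo.
split.
  move=> r s H.
  have H1 := H (col2 1 0); have H2 := H (col2 0 1).
  rewrite /struct_map !col2Z in H1 H2.
  move/ceqP: H1 => [w1 [w2 [E1 E2]]]; move/ceqP: H2 => [v1 [v2 [F1 F2]]].
  have [t Ht] : exists t, w2 = t * x by apply/Hay; apply: (by_eq (-1) E2); ring.
  apply/eqP; rewrite -subr_eq0; apply/eqP; apply: Hxy.
    by exists (w1 + a * t); apply: (by_eq 1 E1); rewrite Ht; ring.
  by exists v2; apply: (by_eq 1 F2); ring.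
move=> f [fW [fD fZ]].
have f0 : ceq (f 0) 0.
  have := fD 0 0; rewrite addr0 /coker_eq => /imN.
  by rewrite opprB addrC addrA addNr add0r subr0.
have fz : forall u, ceq u 0 -> ceq (f u) 0.
  by move=> u /fW H; apply: ceq_trans H f0.
have [p [q Fe1]] : exists p q, f (col2 1 0) = col2 p q.
  by exists (f (col2 1 0) 0 0), (f (col2 1 0) 1 0); exact: col2_ext.
have [r [s Fe2]] : exists p q, f (col2 0 1) = col2 p q.
  by exists (f (col2 0 1) 0 0), (f (col2 0 1) 1 0); exact: col2_ext.
have C1 : ceq (col2 (x * p) (x * q)) (col2 0 0).
  rewrite -col2Z -Fe1; apply: ceq_trans (ceq_sym (fZ _ _)) _; rewrite -col20.
  apply: fz; rewrite col2Z col20; apply/ceqP; exists 1, 0; split; ring.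
have C2 : ceq (col2 (a * p + y * r) (a * q + y * s)) (col2 0 0).
  rewrite -col2D -!col2Z -Fe1 -Fe2.
  apply: ceq_trans (ceq_sym (ceqD (fZ _ _) (fZ _ _))) _.
  apply: ceq_trans (ceq_sym (fD _ _)) _; rewrite -col20.
  apply: fz; rewrite !col2Z col2D col20; apply/ceqP; exists 0, 1; split; ring.
move/ceqP: C1 => [w1 [w2 [E1 E2]]]; move/ceqP: C2 => [v1 [v2 [F1 F2]]].
have [q' Hq] : exists t, q = t * y.
  apply/Hax; apply: Hxy; first by exists q.
  by exists w2; apply: (by_eq 1 E2); ring.
subst q.
have [u Hu] : exists t, a * q' + s - v2 = t * x by apply/Hay; apply: (by_eq 1 F2); ring.
have Hv2 : v2 = a * q' + s - u * x by rewrite -Hu; ring.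
subst v2.
have [al [be Hab]] : ideal2 x y (p - a * q' - s).
  apply: Hw; exists (v1 - a * u), (- r); apply: (by_eq 1 F1); ring.
have Hp : p = a * q' + s + (al * x + be * y) by rewrite -Hab; ring.
subst p.
have [rho Hr] : exists t, a * be + r = t * x.
  apply/Hay; apply: Hxy; last by exists (a * be + r).
  by exists (v1 - a * u - a * al); apply: (by_eq 1 F1); ring.
have Hr' : r = rho * x - a * be by rewrite -Hr; ring.
subst r.
exists (s + be * y).
have G1 : ceq (f (col2 1 0)) ((s + be * y) *: col2 1 0).
  rewrite Fe1 col2Z; apply/ceqP; exists al, q'; split; ring.
have G2 : ceq (f (col2 0 1)) ((s + be * y) *: col2 0 1).
  rewrite Fe2 col2Z; apply/ceqP; exists rho, (- be); split; ring.
move=> v; rewrite /struct_map.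
have Ev : v = v 0 0 *: col2 1 0 + v 1 0 *: col2 0 1.
  rewrite !col2Z col2D {1}(col2_ext v); congr col2; ring.
rewrite {1}Ev.
apply: ceq_trans (fD _ _) _.
rewrite [X in coker_eq _ _ (_ *: X)]Ev scalerDr !scalerA ![(s + be * y) * _]mulrC -!scalerA.
apply: ceqD; apply: ceq_trans (fZ _ _) _; apply: ceqZ => //.
Qed.
End Spec.

Unset Implicit Arguments.
Theorem theorem4p5 (A : comRingType) (x y a : A) :
  noetherian_ring A -> local_ring A ->
  regular_exact_pair x y ->
  weakly_regular_quot2 a x y ->
  End_conclusions (gamma_mx x y a) /\ End_conclusions (eta_mx x y a).
Proof.
move=> Hn Hl [[_ [_ [Hxz Hyz]]] Hint] Hw; split.
- apply: conclusions_gen => //.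
  exact: (struct_iso Hxz Hyz (fun z h1 h2 => Hint z h1 h2) Hw).
- apply: conclusions_gen => //.
  apply: (struct_iso (x := y) (y := x) (a := - a) Hyz Hxz (fun z h1 h2 => Hint z h2 h1)).
  move=> b [r [s E]].
  have [r' [s' E']] : ideal2 x y b.
    by apply: Hw; exists (- s), (- r); rewrite !mulNr -opprD addrC -E mulNr opprK.
  by exists s', r'; rewrite E' addrC.
Qed.
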